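(* Let $p$ be a prime and let $r\geq 2$ be an integer with $p\nmid r$. For integers $e\geq 2$ let $S(p,e,r)$ be the smallest set of positive integers such that (a) $r\in S$; (b) $n\in S$ whenever $n^e\in S$; (c) $(n+p)^e\in S$ whenever $n\in S$. Then there exists an integer $e$ with $2\leq e\leq p-2$ such that $S(p,e,r)=\{n\geq 2: n\not\equiv 0\pmod p\}$ if and only if $p-1$ is not squarefree.
   Context: ''Smallest'' means contained in every set of positive integers satisfying (a), (b), (c). *)

(* Defs.v *)
From mathcomp Require Import all_boot.
Set Implicit Arguments. Unset Strict Implicit. Unset Printing Implicit Defensive.

Definition closed_set (p e r : nat) (T : nat -> Prop) : Prop :=
  [/\ (forall n, T n -> 0 < n),
      T r,
      (forall n, 0 < n -> T (n ^ e) -> T n)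
    & (forall n, T n -> T ((n + p) ^ e))].

Definition S (p e r : nat) (n : nat) : Prop :=
  forall T, closed_set p e r T -> T n.

Definition squarefree (n : nat) : Prop :=
  forall d, 1 < d -> ~~ (d ^ 2 %| n).

(* Main.v *)
Require Import Defs.
From mathcomp Require Import all_boot all_algebra.
Import GRing.Theory.
Local Open Scope ring_scope.

Lemma natF0 p n : prime p -> ((n%:R : 'F_p) == 0) = (p %| n)%N.
Proof. by move=> pP; rewrite (dvdn_pcharf (pchar_Fp pP)). Qed.

Lemma fermatF p n : prime p -> ~~ (p %| n)%N -> (n%:R : 'F_p) ^+ (p.-1) = 1.
Proof.
move=> pP ndv.
have x0 : (n%:R : 'F_p) != 0 by rewrite natF0.
have h : (n%:R : 'F_p) ^+ p = n%:R.
  by rewrite -natrX -Fp_nat_mod // fermat_little // Fp_nat_mod.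
apply: (mulfI x0); rewrite mulr1 -exprS prednK ?prime_gt0 //.
Qed.

Lemma congF p x y : prime p -> (x%:R : 'F_p) = y%:R -> (x %% p = y %% p)%N.
Proof. by move=> pP h; rewrite -!(val_Fp_nat pP) h. Qed.

Lemma coprime_root p (y : 'F_p) e q : (0 < q)%N -> coprime q e ->
  y ^+ q = 1 -> y ^+ e = 1 -> y = 1.
Proof.
move=> q0 co hq he.
case: (Bezoutl e q0) => a _ /dvdnP [b hb].
move: co; rewrite /coprime => /eqP g1; rewrite g1 in hb.
have : y ^+ (1 + a * e)%N = 1 by rewrite hb mulnC exprM hq expr1n.
by rewrite exprD expr1 mulnC exprM he expr1n mulr1.
Qed.

Lemma stepF p a e : prime p -> (((a + p) ^ e)%N%:R : 'F_p) = (a%:R) ^+ e.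
Proof. by move=> pP; rewrite natrX natrD pchar_Fp_0 // addr0. Qed.

Lemma powF p n c : prime p -> ~~ (p %| n)%N -> (n%:R : 'F_p) ^+ (c * p.-1) = 1.
Proof. by move=> pP nd; rewrite mulnC exprM fermatF // expr1n. Qed.

Lemma all_in_S p e r n : prime p -> (1 < e)%N -> (p.-1 %| e ^ 2)%N -> ~~ (p %| r)%N ->
  (2 <= n)%N -> ~~ (p %| n)%N -> S p e r n.
Proof.
move=> pP e1 dv rd n2 nd T [Tpos Tr Tb Tc].
have p0 : (0 < p)%N by rewrite prime_gt0.
have L1 : forall x, T x -> T (x + p)%N.
  by move=> x Tx; apply: Tb (Tc x Tx); rewrite addn_gt0 p0 orbT.
have L2 : forall k x, T x -> T (x + k * p)%N.
  elim=> [|k IH] x Tx; first by rewrite mul0n addn0.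
  by rewrite mulSn addnA; apply: IH; apply: L1.
have L3 : forall x y, T x -> (x <= y)%N -> (x %% p = y %% p)%N -> T y.
  move=> x y Tx xy hm.
  have : (p %| y - x)%N by rewrite -eqn_mod_dvd // hm.
  move/divnK => hk; rewrite -(subnKC xy) -hk; exact: L2.
have Ld : forall j x, (0 < x)%N -> T (x ^ (e ^ j))%N -> T x.
  elim=> [|j IH] x x0; first by rewrite expn0 expn1.
  rewrite expnS expnM => h; apply: Tb => //; apply: IH => //.
  by rewrite expn_gt0 x0.
set x2 := (((r + p) ^ e + p) ^ e)%N.
have Tx2 : T x2 by apply: (Tc); apply: (Tc).
have Fx2 : (x2%:R : 'F_p) = 1.
  rewrite /x2 stepF // stepF // -exprM mulnn.
  by case/dvdnP: dv => c ->; rewrite powF.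
set j := x2.+2.
apply: (Ld j); first by apply: leq_trans n2.
apply: (L3 x2) => //.
  apply: ltnW; apply: (@leq_trans (e ^ j)).
    apply: leq_trans (ltn_expl x2 e1) _; rewrite leq_pexp2l ?(ltnW e1) //.
    by rewrite /j ltnW.
  by apply: ltnW; apply: ltn_expl; apply: leq_trans n2.
apply: congF => //; rewrite Fx2 natrX.
have ej : (e ^ j = e ^ x2 * e ^ 2)%N by rewrite /j -addn2 expnD.
by rewrite ej; case/dvdnP: dv => c ->; rewrite mulnA powF.
Qed.

Lemma nonroot p k : prime p -> (0 < k)%N -> (k < p.-1)%N ->
  exists a, (0 < a < p)%N /\ (a%:R : 'F_p) ^+ k != 1.
Proof.
move=> pP k0 kp.
have : ~~ all (fun x : 'F_p => k.-unity_root x) (enum (predC1 (0 : 'F_p))).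
  apply/negP => hall.
  have := max_unity_roots k0 hall (enum_uniq _).
  by rewrite -cardE cardC1 card_Fp // leqNgt kp.
case/allPn => x; rewrite mem_enum /= unity_rootE => x0 xk.
have xp : (val x < p)%N.
  by apply: leq_trans (ltn_ord x) _; rewrite Fp_cast.
exists (val x); split.
  rewrite xp andbT lt0n; apply: contra x0 => /eqP h; apply/eqP/val_inj.
  by rewrite h.
have -> : ((val x)%:R : 'F_p) = x.
  by apply: val_inj; rewrite /= val_Fp_nat // modn_small.
exact: xk.
Qed.

Lemma get_q m e : squarefree m -> (0 < e)%N -> (e < m)%N ->
  exists q, [/\ prime q, (q %| m)%N & ~~ (q %| e)%N].
Proof.
move=> sf e0 em.
set g := gcdn m e; set d := (m %/ g)%N.
have m0 : (0 < m)%N by apply: leq_trans em.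
have g0 : (0 < g)%N by rewrite gcdn_gt0 m0.
have gm : (g %| m)%N by apply: dvdn_gcdl.
have d1 : (1 < d)%N.
  rewrite ltnNge; apply/negP => hd.
  have : (d = 1)%N.
    apply/eqP; rewrite eqn_leq hd /= /d divn_gt0 //; exact: dvdn_leq.
  move=> h1; have hm : m = g by rewrite -(divnK gm) -/d h1 mul1n.
  have : (m %| e)%N by rewrite hm dvdn_gcdr.
  by move/(dvdn_leq e0); rewrite leqNgt em.
exists (pdiv d); split; first exact: pdiv_prime.
  apply: dvdn_trans (pdiv_dvd d) _; exact: dvdn_div.
apply/negP => qe.
have qg : (pdiv d %| g)%N.
  rewrite dvdn_gcd qe andbT; apply: dvdn_trans (pdiv_dvd d) _; exact: dvdn_div.
have := sf (pdiv d) (prime_gt1 (pdiv_prime d1)); rewrite expnS expn1.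
by rewrite -(divnK gm) -/d mulnC dvdn_mul // pdiv_dvd.
Qed.
From mathcomp Require Import zify.

Lemma inv_P p e q n : prime p -> prime q -> (q %| p.-1)%N -> ~~ (q %| e)%N ->
  ~~ (p %| n)%N ->
  (((n ^ e)%N%:R : 'F_p) ^+ (p.-1 %/ q) == 1) = ((n%:R : 'F_p) ^+ (p.-1 %/ q) == 1).
Proof.
move=> pP qP qm qe nd.
set y := (n%:R : 'F_p) ^+ (p.-1 %/ q).
have yq : y ^+ q = 1 by rewrite /y -exprM divnK // fermatF.
rewrite natrX exprAC -/y.
apply/eqP/eqP => [h|->]; last by rewrite expr1n.
apply: (@coprime_root p y e q (prime_gt0 qP) _ yq h).
by rewrite prime_coprime.
Qed.

Lemma not_all p e r : prime p -> (2 <= e <= p.-1.-1)%N -> ~~ (p %| r)%N -> (0 < r)%N ->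
  squarefree p.-1 -> exists n, ((2 <= n)%N /\ ~~ (p %| n)%N) /\ ~ S p e r n.
Proof.
move=> pP /andP[e2 ep] rd r0 sf.
have e0 : (0 < e)%N by apply: leq_trans e2.
have p1 : (1 < p)%N := prime_gt1 pP.
have em : (e < p.-1)%N.
  by move: e2 ep; clear; lia.
have [q [qP qm qe]] := get_q _ _ sf e0 em.
set k := (p.-1 %/ q)%N.
set P := fun n : nat => ((n%:R : 'F_p) ^+ k == 1).
have PmodE : forall n, P (n + p)%N = P n.
  by move=> n; rewrite /P natrD pchar_Fp_0 // addr0.
pose T := fun n => [/\ (0 < n)%N, ~~ (p %| n)%N & P n = P r].
have TC : closed_set p e r T.
  split.
  - by move=> n [].
  - by split.
  - move=> n n0 [_ nd hP]; have nd' : ~~ (p %| n)%N.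
      by apply: contra nd => h; rewrite Euclid_dvdX // h e0.
    split=> //; rewrite -hP /P inv_P //.
  - move=> n [n0 nd hP].
    have nd' : ~~ (p %| n + p)%N by rewrite dvdn_addl.
    split.
    + by rewrite expn_gt0 addn_gt0 n0.
    + by rewrite Euclid_dvdX // negb_and nd'.
    + by rewrite /P inv_P // -/(P (n + p)%N) PmodE.
have k0 : (0 < k)%N.
  by rewrite /k divn_gt0 ?prime_gt0 // dvdn_leq // -subn1 subn_gt0.
have kp : (k < p.-1)%N.
  rewrite /k ltn_Pdiv ?prime_gt1 //.
  by rewrite -subn1 subn_gt0.
case Pr : (P r).
- have [a [/andP[a0 ap] ak]] := nonroot _ _ pP k0 kp.
  exists a; split.
    split; last by rewrite gtnNdvd.
    rewrite ltn_neqAle a0 andbT; apply/negP => /eqP a1.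
    by move: ak; rewrite -a1 expr1n eqxx.
  move=> Sa; have [_ _] := Sa T TC; rewrite Pr.
  by move: ak => /negbTE; rewrite /P => ->.
- exists p.+1; split.
    split; first by apply: leq_trans p1 _.
    by rewrite -addn1 dvdn_addr // dvdn1 -(eqn_add2r 1) /= addn1 eqSS; apply/negP=> /eqP h; move: p1; rewrite h.
  move=> Sa; have [_ _] := Sa T TC; rewrite Pr.
  have := PmodE 1%N; rewrite add1n => ->.
  by rewrite /P expr1n eqxx.
Qed.
From Stdlib Require Import Classical.
Local Close Scope ring_scope.

Theorem corollary22 (p r : nat) :
  prime p -> 2 <= r -> ~~ (p %| r) ->
  ((exists e, 2 <= e <= p - 2 /\
      (forall n, S p e r n <-> (2 <= n /\ ~~ (p %| n))))
   <-> ~ squarefree (p - 1)).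
Proof.
move=> pP r2 rd.
have r0 : (0 < r)%N by apply: leq_trans r2.
have p1 : (1 < p)%N := prime_gt1 pP.
rewrite subn1 subn2.
split.
  case=> e [he hS] sf.
  have [n [hn nS]] := not_all _ _ _ pP he rd r0 sf.
  by apply: nS; apply/hS.
move=> nsf.
have [d [d1 dd]] : exists d, (1 < d)%N /\ (d ^ 2 %| p.-1)%N.
  apply: NNPP => H; apply: nsf => d d1; apply/negP => dd; apply: H; by exists d.
case/dvdnP: dd => c hc; rewrite expnS expn1 in hc.
have e2 : (2 <= c * d)%N.
  have : (0 < c)%N by rewrite lt0n; apply/eqP => c0; move: hc; rewrite c0 mul0n; lia.
  by move: d1; clear; nia.
exists (c * d)%N; split.
  rewrite e2 /=; move: hc e2 d1 p1; clear; nia.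
have dv : (p.-1 %| (c * d) ^ 2)%N.
  by apply/dvdnP; exists c; rewrite hc; nia.
move=> n; split.
  move=> Sn; apply: (Sn (fun m => (2 <= m)%N /\ ~~ (p %| m))); split.
  - by move=> m [m2 _]; apply: leq_trans m2.
  - by split.
  - move=> m m0 [m2 md]; split.
      rewrite ltnNge; apply/negP => m1.
      have : m = 1%N by apply/eqP; rewrite eqn_leq m1 m0.
      by move=> h; move: m2; rewrite h exp1n.
    by apply: contra md => h; rewrite Euclid_dvdX // h /=; move: e2; clear; lia.
  - move=> m [m2 md]; split.
      apply: leq_trans (_ : 2 ^ (c * d) <= _)%N.
        by rewrite -{1}(expn1 2) leq_pexp2l //; apply: leq_trans e2.
      rewrite leq_exp2r; first by move: p1; clear; lia.
      by move: e2; clear; lia.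
    by rewrite Euclid_dvdX // negb_and dvdn_addl // md.
case=> n2 nd; apply: all_in_S => //.

Qed.
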